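(* Under the hypotheses of Theorem 4 (either case (i) or case (ii)), the solution also satisfies \[ \lim_{t\to\infty}\frac{x(t)}{F^{-1}(t)}=+\infty\qquad\text{and}\qquad\lim_{t\to\infty}\frac{F(x(t))}{t}=0. \] Here Theorem 4's hypotheses are: $f\in C(\mathbb{R};\mathbb{R})$ locally Lipschitz with $f(0)=0$, $xf(x)>0$ for $x\neq0$; $g\in C([0,\infty);\mathbb{R})$ with $g(t)>0$ for $t>0$; $\xi>0$; $x$ is the unique continuous solution of $x'(t)=-f(x(t))+g(t)$, $x(0)=\xi$, and $x(t)\to0$; $\lim_{t\to\infty}g(t)/f(F^{-1}(t))=+\infty$; $f\in\mathrm{RV}_0(\beta)$ with $\beta>1$; $g\in\mathrm{RV}_\infty(-\theta)$ with either $\theta>0$, or $\theta=0$ and $g$ asymptotic to a decreasing function.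
   Context: $F(x)=\int_x^1 \frac{du}{f(u)}$ for $x>0$, strictly decreasing with inverse $F^{-1}$. $\mathrm{RV}_0(\beta)$: measurable positive $\varphi$ on $(0,\infty)$ with $\varphi(\lambda x)/\varphi(x)\to\lambda^\beta$ as $x\to0^+$ for every $\lambda>0$. $\mathrm{RV}_\infty(\alpha)$: measurable positive $h$ with $h(\lambda t)/h(t)\to\lambda^\alpha$ as $t\to\infty$ for every $\lambda>0$. *)

(* Defs.v *)
From Stdlib Require Import Reals Lra.
Open Scope R_scope.

Definition IsF (f F : R -> R) : Prop :=
  forall x, 0 < x ->
    exists pr : Riemann_integrable (fun u => / f u) x 1, F x = RiemannInt pr.

(* Finv is the inverse of F (on the range of F, which contains [T,+oo)). *)
Definition IsFinv (F Finv : R -> R) : Prop :=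
  exists T, forall t, T <= t -> 0 < Finv t /\ F (Finv t) = t.

Definition tends_to_pinfty (h : R -> R) : Prop :=
  forall M, exists T, forall t, T <= t -> M < h t.

Definition tends_to_at_pinfty (h : R -> R) (l : R) : Prop :=
  forall eps, 0 < eps -> exists T, forall t, T <= t -> Rabs (h t - l) < eps.

Definition loc_lipschitz (f : R -> R) : Prop :=
  forall a, 0 < a -> exists L, forall x y, Rabs x <= a -> Rabs y <= a ->
    Rabs (f x - f y) <= L * Rabs (x - y).

Definition RV0 (phi : R -> R) (beta : R) : Prop :=
  (forall x, 0 < x -> 0 < phi x) /\
  forall lam, 0 < lam -> forall eps, 0 < eps -> exists delta, 0 < delta /\
    forall x, 0 < x < delta -> Rabs (phi (lam * x) / phi x - Rpower lam beta) < eps.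

Definition RVinf (h : R -> R) (alpha : R) : Prop :=
  (forall t, 0 < t -> 0 < h t) /\
  forall lam, 0 < lam -> tends_to_at_pinfty (fun t => h (lam * t) / h t) (Rpower lam alpha).

(* g is asymptotic (as t -> oo) to a (non-increasing) decreasing function *)
Definition asymp_decreasing (g : R -> R) : Prop :=
  exists h : R -> R, (forall s t, 0 < s -> s <= t -> h t <= h s) /\
    tends_to_at_pinfty (fun t => g t / h t) 1.

(* Main.v *)
Require Import Defs.
From Coquelicot Require Import Coquelicot.
From Stdlib Require Import Reals Lra Lia Arith ClassicalEpsilon Classical.
Open Scope R_scope.

Lemma left_lower (x : R -> R) r D :
  derivable_pt_lim x r D -> 0 < D ->
  exists eta, 0 < eta /\ forall h, 0 < h < eta -> x (r - h) < x r.
Proof.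
  intros H HD. destruct (H D HD) as [d Hd].
  exists d. split; [apply cond_pos|]. intros h Hh.
  assert (Hne : -h <> 0) by lra.
  assert (Ha : Rabs (-h) < d) by (rewrite Rabs_Ropp, Rabs_right; lra).
  specialize (Hd (-h) Hne Ha).
  replace (r + - h) with (r - h) in Hd by ring.
  apply Rabs_def2 in Hd. destruct Hd as [_ Hd].
  assert (Hq: 0 < (x (r - h) - x r) / - h) by lra.
  assert (0 < (x r - x (r - h)) / h).
  { replace ((x r - x (r - h)) / h) with ((x (r - h) - x r) / - h) by (field; lra). exact Hq. }
  assert (0 < x r - x (r-h)).
  { replace (x r - x (r - h)) with (((x r - x (r - h)) / h) * h) by (field; lra).
    apply Rmult_lt_0_compat; lra. }
  lra.
Qed.

Lemma min_arg (x D : R -> R) a b : 0 < a -> a <= b ->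
  (forall r, 0 < r -> derivable_pt_lim x r (D r)) ->
  (forall r, a <= r <= b -> x r <= x b -> 0 < D r) -> x a <= x b.
Proof.
  intros Ha Hab Hd Hc.
  destruct (Rle_or_lt (x a) (x b)) as [|Hlt]; [assumption|exfalso].
  destruct (continuity_ab_min x a b Hab) as [r [Hmin Hr]].
  { intros c Hc'. apply derivable_continuous_pt. exists (D c). apply Hd. lra. }
  assert (Hxr : x r <= x b) by (apply Hmin; lra).
  assert (HD := Hc r Hr Hxr).
  destruct (Req_dec r a) as [->|Hra]; [lra|].
  destruct (left_lower x r (D r) (Hd r ltac:(lra)) HD) as [eta [Heta Hl]].
  set (h := Rmin eta (r - a) / 2).
  assert (0 < h < eta).
  { unfold h. assert (0 < Rmin eta (r-a)) by (apply Rmin_pos; lra).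
    assert (Rmin eta (r-a) <= eta) by apply Rmin_l. lra. }
  assert (h <= (r - a)/2) by (unfold h; assert (Rmin eta (r-a) <= r-a) by apply Rmin_r; lra).
  specialize (Hl h H). assert (x r <= x (r - h)) by (apply Hmin; lra). lra.
Qed.

Definition closedR (E : R -> Prop) := forall y, (forall eta, 0 < eta -> exists z, E z /\ Rabs (z - y) < eta) -> E y.

Lemma baire_step (E : R -> Prop) p q : closedR E -> p < q ->
  (exists a, p <= a <= q /\ ~ E a) ->
  exists p' q', p <= p' /\ p' < q' /\ q' <= q /\ forall a, p' <= a <= q' -> ~ E a.
Proof.
  intros Hc Hpq [a [Ha Hna]].
  assert (exists eta, 0 < eta /\ forall b, Rabs (b - a) < eta -> ~ E b) as [eta [He Hb]].
  { apply NNPP. intro Hn. apply Hna. apply Hc. intros eta Heta.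
    apply NNPP. intro Hn2. apply Hn. exists eta. split; auto. intros b Hb Eb.
    apply Hn2. exists b. split; auto. }
  exists (Rmax p (a - eta/2)), (Rmin q (a + eta/2)).
  split; [apply Rmax_l|]. split.
  { apply Rmax_lub_lt; apply Rmin_glb_lt; lra. }
  split; [apply Rmin_l|]. intros c Hc'. apply Hb.
  assert (a - eta/2 <= Rmax p (a - eta/2)) by apply Rmax_r.
  assert (Rmin q (a + eta/2) <= a + eta/2) by apply Rmin_r.
  apply Rabs_def1; lra.
Qed.

Lemma baire (E : nat -> R -> Prop) A B : A < B -> (forall n, closedR (E n)) ->
  (forall a, A <= a <= B -> exists n, E n a) ->
  exists n p q, p < q /\ forall a, p <= a <= q -> E n a.
Proof.
  intros HAB Hc Hcov. apply NNPP. intro Hno.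
  assert (Hst : forall n (pq : {pq : R * R | fst pq < snd pq}),
     {pq' : R * R | fst (proj1_sig pq) <= fst pq' /\ fst pq' < snd pq' /\ snd pq' <= snd (proj1_sig pq)
        /\ forall a, fst pq' <= a <= snd pq' -> ~ E n a}).
  { intros n [[p q] Hpq]. apply constructive_indefinite_description. simpl in *.
    destruct (baire_step (E n) p q (Hc n) Hpq) as [p' [q' H]].
    { apply NNPP. intro Hn. apply Hno. exists n, p, q. split; auto. intros a Ha.
      apply NNPP. intro Hna. apply Hn. exists a. auto. }
    exists (p', q'). simpl. exact H. }
  set (S := fix S (n : nat) : {pq : R * R | fst pq < snd pq} :=
     match n with O => exist _ (A, B) HAB
     | S k => let r := Hst k (S k) in exist _ (proj1_sig r) (proj1 (proj2 (proj2_sig r))) end).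
  set (p n := fst (proj1_sig (S n))). set (q n := snd (proj1_sig (S n))).
  assert (Hpq : forall n, p n < q n) by (intro n; exact (proj2_sig (S n))).
  assert (Hinc : forall n, p n <= p (Datatypes.S n) /\ q (Datatypes.S n) <= q n
                   /\ forall a, p (Datatypes.S n) <= a <= q (Datatypes.S n) -> ~ E n a).
  { intro n. unfold p, q. simpl. destruct (Hst n (S n)) as [pq' Hp]. simpl. tauto. }
  assert (Hpm : forall n k, p n <= p (n + k)%nat).
  { intros n k; induction k. rewrite Nat.add_0_r; lra.
    rewrite Nat.add_succ_r. specialize (Hinc (n+k)%nat). lra. }
  assert (Hqm : forall n k, q (n + k)%nat <= q n).
  { intros n k; induction k. rewrite Nat.add_0_r; lra.
    rewrite Nat.add_succ_r. specialize (Hinc (n+k)%nat). lra. }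
  assert (Hpq2 : forall n m, p n <= q m).
  { intros n m. destruct (le_lt_dec n m) as [Hl|Hl].
    - replace m with (n + (m - n))%nat by lia. specialize (Hpm n (m-n)%nat).
      specialize (Hpq (n + (m-n))%nat). lra.
    - replace n with (m + (n - m))%nat by lia. specialize (Hqm m (n-m)%nat).
      specialize (Hpq (m + (n-m))%nat). lra. }
  destruct (completeness (fun y => exists n, y = p n)) as [s [Hub Hlub]].
  { exists (q O). intros y [n ->]. apply Hpq2. }
  { exists (p O). eauto. }
  assert (Hs1 : forall n, p n <= s) by (intro n; apply Hub; eauto).
  assert (Hs2 : forall m, s <= q m).
  { intro m. apply Hlub. intros y [n ->]. apply Hpq2. }
  assert (A <= s <= B).
  { specialize (Hs1 O). specialize (Hs2 O). unfold p, q in *. simpl in *. lra. }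
  destruct (Hcov s H) as [n Hn].
  destruct (Hinc n) as [_ [_ Hn2]]. apply (Hn2 s); auto.
Qed.

Lemma rp_mono a b be : 0 < a -> a <= b -> 0 <= be -> Rpower a be <= Rpower b be.
Proof.
  intros Ha Hab Hb. unfold Rpower.
  destruct (Req_dec a b) as [->|Hne]; [lra|].
  destruct (Req_dec be 0) as [->|Hbe]. rewrite !Rmult_0_l; lra.
  left. apply exp_increasing. apply Rmult_lt_compat_l; [lra|]. apply ln_increasing; lra.
Qed.

Lemma rp_ge1 a be : 1 <= a -> 0 <= be -> 1 <= Rpower a be.
Proof.
  intros Ha Hb. replace 1 with (Rpower 1 be) at 1.
  apply rp_mono; lra. unfold Rpower. rewrite ln_1, Rmult_0_r. apply exp_0.
Qed.

Section UCT.
Variable f : R -> R.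
Variable be : R.
Hypothesis Hfc : continuity f.
Hypothesis Hfp : forall y, 0 < y -> 0 < f y.
Hypothesis HRV : RV0 f be.
Hypothesis Hbe : 0 < be.

Let C0 := Rpower 2 be + 1.

Definition EE (n : nat) (a : R) := 1 <= a <= 2 /\ forall z, 0 < z < / (INR n + 1) ->
   f (a * z) <= C0 * f z /\ f z <= C0 * f (a * z).

Lemma C0_ge2 : 2 <= C0.
Proof. unfold C0. assert (1 <= Rpower 2 be) by (apply rp_ge1; lra). lra. Qed.

Lemma EE_closed n : closedR (EE n).
Proof.
  intros y Hy.
  assert (Hy1 : 1 <= y <= 2).
  { split; apply Rnot_lt_le; intro Hl.
    - destruct (Hy (1 - y) ltac:(lra)) as [z [[Hz _] Hz2]]. apply Rabs_def2 in Hz2. lra.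
    - destruct (Hy (y - 2) ltac:(lra)) as [z [[Hz _] Hz2]]. apply Rabs_def2 in Hz2. lra. }
  split; auto. intros z Hz. assert (HC := C0_ge2).
  assert (Hz0 : 0 < z) by lra.
  assert (Hfz : 0 < f z) by (apply Hfp; lra).
  assert (Hfyz : 0 < f (y * z)) by (apply Hfp; nra).
  split; apply Rnot_lt_le; intro Hl.
  - destruct (Hfc (y*z) (f (y*z) - C0 * f z) ltac:(lra)) as [d [Hd Hd2]].
    destruct (Hy (d / z) ltac:(apply Rdiv_lt_0_compat; lra)) as [b [[_ Hb] Hbd]].
    specialize (Hb z Hz). specialize (Hd2 (b * z)).
    assert (Hbz : Rabs (b * z - y * z) < d).
    { replace (b*z - y*z) with ((b - y) * z) by ring. rewrite Rabs_mult, (Rabs_right z) by lra.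
      apply Rmult_lt_compat_r with (r := z) in Hbd; [|lra].
      replace (d / z * z) with d in Hbd by (field; lra). lra. }
    assert (Hbz' : D_x no_cond (y * z) (b * z) /\ R_dist (b * z) (y * z) < d -> R_dist (f (b * z)) (f (y * z)) < f (y * z) - C0 * f z) by exact Hd2.
    destruct (Req_dec (b*z) (y*z)) as [He|He].
    + rewrite He in Hb. lra.
    + assert (HH : R_dist (f (b * z)) (f (y * z)) < f (y * z) - C0 * f z).
      { apply Hbz'. split. split. exact I. auto. exact Hbz. }
      unfold R_dist in HH. apply Rabs_def2 in HH. lra.
  - destruct (Hfc (y*z) ((f z - C0 * f (y*z))/C0) ltac:(apply Rdiv_lt_0_compat; lra)) as [d [Hd Hd2]].
    destruct (Hy (d / z) ltac:(apply Rdiv_lt_0_compat; lra)) as [b [[_ Hb] Hbd]].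
    specialize (Hb z Hz). specialize (Hd2 (b * z)).
    assert (Hbz : Rabs (b * z - y * z) < d).
    { replace (b*z - y*z) with ((b - y) * z) by ring. rewrite Rabs_mult, (Rabs_right z) by lra.
      apply Rmult_lt_compat_r with (r := z) in Hbd; [|lra].
      replace (d / z * z) with d in Hbd by (field; lra). lra. }
    destruct (Req_dec (b*z) (y*z)) as [He|He].
    + rewrite He in Hb. lra.
    + assert (HH : R_dist (f (b * z)) (f (y * z)) < (f z - C0 * f (y*z))/C0).
      { apply Hd2. split. split. exact I. auto. exact Hbz. }
      unfold R_dist in HH. apply Rabs_def2 in HH.
      assert (C0 * f (b*z) < C0 * f (y*z) + (f z - C0 * f (y*z))).
      { replace (f z - C0 * f (y*z)) with (C0 * ((f z - C0 * f (y*z))/C0)) by (field; lra).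
        rewrite <- Rmult_plus_distr_l. apply Rmult_lt_compat_l; lra. }
      lra.
Qed.

Lemma EE_cover a : 1 <= a <= 2 -> exists n, EE n a.
Proof.
  intros Ha. destruct HRV as [_ H]. destruct (H a ltac:(lra) (1/2) ltac:(lra)) as [d [Hd Hd2]].
  destruct (archimed_cor1 d Hd) as [N [HN HN0]].
  exists N. split; auto. intros z Hz.
  assert (HINR : 0 < INR N) by (apply lt_0_INR; auto).
  assert (/ (INR N + 1) < / INR N) by (apply Rinv_lt_contravar; nra).
  specialize (Hd2 z ltac:(lra)). apply Rabs_def2 in Hd2.
  assert (Hfz : 0 < f z) by (apply Hfp; lra).
  assert (Hp1 : 1 <= Rpower a be) by (apply rp_ge1; lra).
  assert (Hp2 : Rpower a be <= Rpower 2 be) by (apply rp_mono; lra).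
  assert (Hr : f (a * z) = f (a*z) / f z * f z) by (field; lra).
  unfold C0. split.
  - rewrite Hr. apply Rmult_le_compat_r; lra.
  - assert (f z <= 2 * f (a * z)).
    { rewrite Hr. assert (1/2 <= f (a*z) / f z) by lra. nra. }
    assert (0 < f (a*z)) by (apply Hfp; nra). nra.
Qed.

Lemma uct_base : exists rho C d, 1 < rho /\ 1 <= C /\ 0 < d /\
  forall z r, 0 < z < d -> 1 <= r <= rho -> f (r * z) <= C * f z /\ f z <= C * f (r * z).
Proof.
  destruct (baire EE 1 2 ltac:(lra) EE_closed EE_cover) as [n [p [q [Hpq Hin]]]].
  assert (Hp := Hin p ltac:(lra)). assert (Hq := Hin q ltac:(lra)).
  destruct Hp as [Hp1 Hp]. destruct Hq as [Hq1 _].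
  assert (HC := C0_ge2).
  exists (q / p), (C0 * C0), (p / (INR n + 1)).
  assert (0 < INR n + 1) by (pose proof (pos_INR n); lra).
  split. { apply (Rmult_lt_reg_r p); [lra|]. field_simplify; lra. }
  split. nra. split. apply Rdiv_lt_0_compat; lra.
  intros z r Hz Hr.
  set (w := z / p).
  assert (Hw : 0 < w < / (INR n + 1)).
  { unfold w. split. apply Rdiv_lt_0_compat; lra.
    apply (Rmult_lt_reg_r p); [lra|]. replace (z/p*p) with z by (field; lra).
    replace (/ (INR n + 1) * p) with (p / (INR n + 1)) by (field; lra). lra. }
  assert (Har : p <= r * p <= q).
  { split. nra. assert (r * p <= q / p * p) by (apply Rmult_le_compat_r; lra).
    replace (q/p*p) with q in H0 by (field; lra). lra. }
  destruct (Hin (r * p) Har) as [_ Hrp]. destruct (Hrp w Hw) as [A1 A2].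
  destruct (Hp w Hw) as [B1 B2].
  replace (r * p * w) with (r * z) in A1, A2 by (unfold w; field; lra).
  replace (p * w) with z in B1, B2 by (unfold w; field; lra).
  assert (0 < f w) by (apply Hfp; lra).
  split; nra.
Qed.

End UCT.

Lemma big_nat (A : R) : exists m : nat, A < INR m.
Proof.
  destruct (Rle_or_lt A 0) as [H|H]. exists 1%nat. simpl; lra.
  destruct (archimed_cor1 (/A) ltac:(apply Rinv_0_lt_compat; lra)) as [N [HN HN0]].
  exists N. assert (0 < INR N) by (apply lt_0_INR; auto).
  apply Rinv_lt_contravar in HN. rewrite !Rinv_inv in HN. lra. apply Rmult_lt_0_compat; apply Rinv_0_lt_compat; lra.
Qed.

Lemma pow_big (rho A : R) : 1 < rho -> exists m : nat, A <= rho ^ m.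
Proof.
  intros H. destruct (big_nat (A / (rho - 1))) as [m Hm]. exists m.
  pose proof (Rfunctions.poly m (rho - 1) ltac:(lra)). replace (1 + (rho-1)) with rho in H0 by ring.
  assert (A < INR m * (rho - 1)).
  { apply (Rmult_lt_compat_r (rho-1)) in Hm; [|lra]. replace (A / (rho-1) * (rho-1)) with A in Hm by (field; lra). lra. }
  lra.
Qed.

Section UCT2.
Variable f : R -> R.
Variable be : R.
Hypothesis Hfc : continuity f.
Hypothesis Hfp : forall y, 0 < y -> 0 < f y.
Hypothesis Hfn : forall y, y <= 0 -> f y <= 0.
Hypothesis HRV : RV0 f be.
Hypothesis Hbe : 0 < be.

Lemma uct_pow rho C d : 1 < rho -> 1 <= C -> 0 < d ->
  (forall z r, 0 < z < d -> 1 <= r <= rho -> f (r * z) <= C * f z /\ f z <= C * f (r * z)) ->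
  forall m z r, 0 < z -> z * rho ^ m < d -> 1 <= r <= rho ^ m ->
    f (r * z) <= C ^ m * f z /\ f z <= C ^ m * f (r * z).
Proof.
  intros Hrho HC Hd Hb m. induction m as [|m IH]; intros z r Hz Hzd Hr.
  - simpl in *. replace r with 1 by lra. rewrite Rmult_1_l. lra.
  - assert (Hpm : 1 <= rho ^ m) by (apply pow_R1_Rle; lra).
    assert (HCm : 1 <= C ^ m) by (apply pow_R1_Rle; lra).
    simpl in Hzd, Hr |- *.
    assert (Hzd' : z < d) by nra.
    destruct (Hb z rho ltac:(lra) ltac:(lra)) as [B1 B2].
    assert (0 < f z) by (apply Hfp; lra). assert (0 < f (rho * z)) by (apply Hfp; nra).
    destruct (Rle_or_lt r rho) as [Hr1|Hr1].
    + destruct (Hb z r ltac:(lra) ltac:(lra)) as [A1 A2].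
      assert (0 < f (r * z)) by (apply Hfp; nra). split; nra.
    + destruct (IH (rho * z) (r / rho) ltac:(nra) ltac:(nra)) as [A1 A2].
      { split. apply (Rmult_le_reg_r rho); [lra|]. field_simplify; lra.
        apply (Rmult_le_reg_r rho); [lra|]. field_simplify; lra. }
      replace (r / rho * (rho * z)) with (r * z) in A1, A2 by (field; lra).
      assert (0 < f (r * z)) by (apply Hfp; nra). split; nra.
Qed.

Lemma uct (M : R) : 1 <= M -> exists K d, 0 < K /\ 0 < d /\
  forall z y, 0 < z < d -> y <= M * z -> f y <= K * f z.
Proof.
  intros HM.
  destruct (uct_base f be Hfc Hfp HRV Hbe) as [rho [C [d [Hrho [HC [Hd Hb]]]]]].
  destruct (pow_big rho (M + 2) Hrho) as [m Hm].
  destruct HRV as [_ H2]. destruct (H2 (/2) ltac:(lra) (1 - Rpower (/2) be)) as [dh [Hdh Hh]].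
  { assert (Rpower (/2) be < 1); [|lra]. unfold Rpower. rewrite <- exp_0. apply exp_increasing.
    assert (ln (/2) < 0). rewrite <- ln_1. apply ln_increasing; lra. nra. }
  assert (Hhalf : forall v, 0 < v < dh -> f (/2 * v) < f v).
  { intros v Hv. specialize (Hh v Hv). apply Rabs_def2 in Hh. assert (0 < f v) by (apply Hfp; lra).
    assert (f (/2 * v) / f v < 1) by lra. apply (Rmult_lt_reg_r (/ f v)). apply Rinv_0_lt_compat; lra.
    rewrite Rinv_r by lra. exact H0. }
  assert (Hpm : 1 <= rho ^ m) by (apply pow_R1_Rle; lra).
  assert (HCm : 1 <= C ^ m) by (apply pow_R1_Rle; lra).
  exists (C ^ m), (Rmin (d / rho ^ m) dh). split; [lra|]. split.
  { apply Rmin_pos; auto. apply Rdiv_lt_0_compat; lra. }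
  intros z y Hz Hy.
  assert (Hz1 : z < d / rho ^ m) by (pose proof (Rmin_l (d / rho ^ m) dh); lra).
  assert (Hz2 : z < dh) by (pose proof (Rmin_r (d / rho ^ m) dh); lra).
  assert (Hzr : z * rho ^ m < d).
  { apply (Rmult_lt_compat_r (rho ^ m)) in Hz1; [|lra]. replace (d / rho ^ m * rho ^ m) with d in Hz1 by (field; lra). lra. }
  assert (Hfz : 0 < f z) by (apply Hfp; lra).
  assert (HP := uct_pow rho C d Hrho HC Hd Hb m).
  destruct (Rle_or_lt y 0) as [Hy0|Hy0]. { specialize (Hfn y Hy0). nra. }
  destruct (Rle_or_lt y z) as [Hyz|Hyz].
  - assert (Hdy : forall j y, 0 < y -> z <= 2 ^ j * y -> y <= z -> f y <= C ^ m * f z).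
    { intro j. induction j as [|j IH]; intros y' Hy' H1 H2'.
      - simpl in H1. replace y' with z by lra. nra.
      - destruct (Rle_or_lt z (2 * y')) as [H3|H3].
        + destruct (HP y' (z / y') Hy' ltac:(nra)) as [_ A].
          { split. apply (Rmult_le_reg_r y'); [lra|]. field_simplify; lra.
            apply (Rmult_le_reg_r y'); [lra|]. field_simplify; nra. }
          replace (z / y' * y') with z in A by (field; lra). exact A.
        + assert (f (2 * y') <= C ^ m * f z) by (apply IH; simpl in H1; lra).
          assert (f (/2 * (2 * y')) < f (2 * y')) by (apply Hhalf; lra).
          replace (/2 * (2 * y')) with y' in H0 by field. lra. }
    destruct (big_nat (z / y)) as [j Hj]. apply (Hdy j); auto; try lra.
    pose proof (Rfunctions.poly j 1 ltac:(lra)). replace (1+1) with 2 in H by ring.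
    apply (Rmult_lt_compat_r y) in Hj; [|lra]. replace (z / y * y) with z in Hj by (field; lra). nra.
  - destruct (HP z (y / z) ltac:(lra) Hzr) as [A _].
    { split. apply (Rmult_le_reg_r z); [lra|]. field_simplify; lra.
      apply (Rmult_le_reg_r z); [lra|]. field_simplify; nra. }
    replace (y / z * z) with y in A by (field; lra). exact A.
Qed.

End UCT2.

Section FF.
Variable f F : R -> R.
Hypothesis Hfc : continuity f.
Hypothesis Hfp : forall y, 0 < y -> 0 < f y.
Hypothesis HF : IsF f F.

Let phi := fun u => / f u.

Lemma phi_cont z : 0 < z -> continuous phi z.
Proof.
  intros Hz. apply continuity_pt_filterlim. apply (continuity_pt_inv f z (Hfc z)).
  specialize (Hfp z Hz). lra.
Qed.

Lemma phi_ex a b : 0 < a -> 0 < b -> ex_RInt phi a b.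
Proof.
  intros Ha Hb. apply (@ex_RInt_continuous R_CompleteNormedModule). intros z Hz. apply phi_cont.
  assert (0 < Rmin a b) by (apply Rmin_pos; auto). lra.
Qed.

Lemma F_eq y : 0 < y -> F y = RInt phi y 1.
Proof. intros Hy. destruct (HF y Hy) as [pr ->]. symmetry. apply RInt_Reals. Qed.

Lemma F_split a b : 0 < a -> 0 < b -> F a = RInt phi a b + F b.
Proof.
  intros Ha Hb. rewrite !F_eq by auto.
  rewrite <- (RInt_Chasles phi a b 1) by (apply phi_ex; lra). reflexivity.
Qed.

Lemma RInt_phi_ge0 a b : 0 < a -> a <= b -> 0 <= RInt phi a b.
Proof.
  intros Ha Hab. apply RInt_ge_0; auto. apply phi_ex; lra.
  intros x Hx. unfold phi. left. apply Rinv_0_lt_compat, Hfp. lra.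
Qed.

Lemma F_mono a b : 0 < a -> a <= b -> F b <= F a.
Proof.
  intros Ha Hab. rewrite (F_split a b) by lra. pose proof (RInt_phi_ge0 a b Ha Hab). lra.
Qed.

Lemma Finv_mono Finv T0 : (forall t, T0 <= t -> 0 < Finv t /\ F (Finv t) = t) ->
  forall r t, T0 <= r -> r <= t -> Finv t <= Finv r.
Proof.
  intros H r t Hr Hrt. destruct (H r Hr) as [A1 A2]. destruct (H t ltac:(lra)) as [B1 B2].
  apply Rnot_lt_le. intro Hl. assert (F (Finv t) <= F (Finv r)) by (apply F_mono; lra).
  assert (r = t) by lra. subst. lra.
Qed.

Lemma Finv_small Finv T0 : (forall t, T0 <= t -> 0 < Finv t /\ F (Finv t) = t) ->
  forall eta, 0 < eta -> exists T, T0 <= T /\ forall t, T <= t -> Finv t < eta.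
Proof.
  intros H eta Heta. exists (Rmax T0 (F eta + 1)). split. apply Rmax_l.
  intros t Ht. pose proof (Rmax_l T0 (F eta + 1)). pose proof (Rmax_r T0 (F eta + 1)).
  destruct (H t ltac:(lra)) as [A1 A2]. apply Rnot_le_lt. intro Hl.
  assert (F (Finv t) <= F eta) by (apply F_mono; lra). lra.
Qed.

Lemma G_contr c2 d2 d : 2 < c2 -> 0 < d -> d <= d2 ->
  (forall v, 0 < v < d2 -> c2 * f v <= f (2 * v)) ->
  forall y, 0 < y -> 2 * y <= d -> c2 / 2 * RInt phi (2 * y) d <= RInt phi y d.
Proof.
  intros Hc Hd Hdd Hv y Hy Hyd.
  rewrite <- (RInt_Chasles phi y (d/2) d) by (apply phi_ex; lra).
  assert (0 <= RInt phi (d/2) d) by (apply RInt_phi_ge0; lra).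
  assert (Hcl : RInt (fun w => scal (/2) (phi (/2 * w + 0))) (2 * y) d = RInt phi y (d / 2)).
  { rewrite (@RInt_comp_lin R_CompleteNormedModule). f_equal; field. replace (/2 * (2*y) + 0) with y by field.
    replace (/2 * d + 0) with (d/2) by field. apply phi_ex; lra. }
  assert (Hle : RInt (fun w => scal (c2/2) (phi w)) (2*y) d <= RInt (fun w => scal (/2) (phi (/2 * w + 0))) (2 * y) d).
  { apply RInt_le. lra. apply (@ex_RInt_scal R_NormedModule), phi_ex; lra.
    apply (@ex_RInt_comp_lin R_NormedModule). replace (/2 * (2*y) + 0) with y by field.
    replace (/2 * d + 0) with (d/2) by field. apply phi_ex; lra.
    intros w Hw. unfold scal; simpl. unfold mult; simpl. unfold phi.
    replace (/2 * w + 0) with (w/2) by field.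
    specialize (Hv (w/2) ltac:(lra)). replace (2 * (w/2)) with w in Hv by field.
    assert (0 < f (w/2)) by (apply Hfp; lra). assert (0 < f w) by (apply Hfp; lra).
    apply (Rmult_le_reg_r (2 * f w * f (w/2))). nra.
    field_simplify; try lra. }
  rewrite (@RInt_scal R_CompleteNormedModule) in Hle by (apply phi_ex; lra).
  rewrite Hcl in Hle. change (plus (RInt phi y (d/2)) (RInt phi (d/2) d)) with (RInt phi y (d/2) + RInt phi (d/2) d).
  change (scal (c2/2) (RInt phi (2*y) d)) with (c2 / 2 * RInt phi (2 * y) d) in Hle. lra.
Qed.

End FF.

Theorem mainTheorem10
  (f g F Finv x : R -> R) (xi beta theta : R)
  (Hf_cont : continuity f) (Hf_lip : loc_lipschitz f) (Hf0 : f 0 = 0)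
  (Hf_sign : forall y, y <> 0 -> 0 < y * f y)
  (HF : IsF f F) (HFinv : IsFinv F Finv)
  (Hg_cont : forall t, 0 < t -> continuity_pt g t)
  (Hg_cont0 : forall eps, 0 < eps -> exists delta, 0 < delta /\
       forall t, 0 <= t < delta -> Rabs (g t - g 0) < eps)
  (Hg_pos : forall t, 0 < t -> 0 < g t)
  (Hxi : 0 < xi)
  (Hx_ode : forall t, 0 < t -> derivable_pt_lim x t (- f (x t) + g t))
  (Hx_cont0 : forall eps, 0 < eps -> exists delta, 0 < delta /\
       forall t, 0 <= t < delta -> Rabs (x t - xi) < eps)
  (Hx0 : x 0 = xi)
  (Hx_lim : tends_to_at_pinfty x 0)
  (Hgf : tends_to_pinfty (fun t => g t / f (Finv t)))
  (HfRV : RV0 f beta) (Hbeta : 1 < beta)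
  (HgRV : RVinf g (- theta))
  (Htheta : 0 < theta \/ (theta = 0 /\ asymp_decreasing g)) :
  tends_to_pinfty (fun t => x t / Finv t) /\
  tends_to_at_pinfty (fun t => F (x t) / t) 0.
Proof.
  assert (Hfp : forall y, 0 < y -> 0 < f y).
  { intros y Hy. specialize (Hf_sign y ltac:(lra)). nra. }
  assert (Hfn : forall y, y <= 0 -> f y <= 0).
  { intros y Hy. destruct (Req_dec y 0) as [->|Hne]. lra. specialize (Hf_sign y Hne). nra. }
  assert (Hbe : 0 < beta) by lra.
  destruct HFinv as [T0 HT0].
  assert (Hxpos : forall t, 0 <= t -> 0 < x t).
  { intros t Ht. destruct (Req_dec t 0) as [->|Ht0]. lra.
    destruct (Hx_cont0 xi Hxi) as [d0 [Hd0 Hd0']].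
    set (s := Rmin d0 t / 2).
    assert (Hs : 0 < s < t /\ s < d0).
    { unfold s. assert (0 < Rmin d0 t) by (apply Rmin_pos; lra).
      pose proof (Rmin_l d0 t). pose proof (Rmin_r d0 t). lra. }
    assert (0 < x s) by (specialize (Hd0' s ltac:(lra)); apply Rabs_def2 in Hd0'; lra).
    apply Rnot_le_lt. intro Hxt.
    assert (x s <= x t); [|lra].
    apply (min_arg x (fun r => - f (x r) + g r) s t); try lra. exact Hx_ode.
    intros r Hr Hxr. specialize (Hfn (x r) ltac:(lra)). specialize (Hg_pos r ltac:(lra)). lra. }
  assert (G1 : tends_to_pinfty (fun t => x t / Finv t)).
  { intros M. set (M' := Rmax M 1).
    assert (HM1 : 1 <= M') by apply Rmax_r. assert (HM2 : M <= M') by apply Rmax_l.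
    destruct (uct f beta Hf_cont Hfp Hfn HfRV Hbe M' HM1) as [K [d [HK [Hd Hu]]]].
    destruct (Hgf K) as [T1 HT1].
    destruct (Finv_small f F Hf_cont Hfp HF Finv T0 HT0 d Hd) as [T2 [HT2a HT2]].
    set (T := Rmax (Rmax T0 T1) (Rmax T2 1)).
    assert (HT : T0 <= T /\ T1 <= T /\ T2 <= T /\ 1 <= T).
    { unfold T. pose proof (Rmax_l T0 T1). pose proof (Rmax_r T0 T1).
      pose proof (Rmax_l T2 1). pose proof (Rmax_r T2 1).
      pose proof (Rmax_l (Rmax T0 T1) (Rmax T2 1)). pose proof (Rmax_r (Rmax T0 T1) (Rmax T2 1)). lra. }
    assert (HxT : 0 < x T) by (apply Hxpos; lra).
    destruct (Hx_lim (x T) HxT) as [T3 HT3].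
    exists (Rmax T T3). intros t Ht.
    pose proof (Rmax_l T T3). pose proof (Rmax_r T T3).
    destruct (HT0 t ltac:(lra)) as [Hz _].
    assert (Hgt : M' * Finv t < x t).
    { apply Rnot_le_lt. intro Hle.
      assert (x T <= x t).
      { apply (min_arg x (fun r => - f (x r) + g r) T t); try lra. exact Hx_ode.
        intros r Hr Hxr.
        assert (Hfm : Finv t <= Finv r) by (apply (Finv_mono f F Hf_cont Hfp HF Finv T0 HT0); lra).
        destruct (HT0 r ltac:(lra)) as [Hzr _].
        assert (Hzd : Finv r < d) by (apply HT2; lra).
        assert (f (x r) <= K * f (Finv r)) by (apply Hu; nra).
        specialize (HT1 r ltac:(lra)). assert (0 < f (Finv r)) by (apply Hfp; lra).
        assert (K * f (Finv r) < g r).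
        { apply (Rmult_lt_compat_r (f (Finv r))) in HT1; [|lra].
          replace (g r / f (Finv r) * f (Finv r)) with (g r) in HT1 by (field; lra). exact HT1. }
        lra. }
      specialize (HT3 t ltac:(lra)). apply Rabs_def2 in HT3. lra. }
    apply (Rmult_lt_reg_r (Finv t)); [lra|].
    replace (x t / Finv t * Finv t) with (x t) by (field; lra). nra. }
  split; [exact G1|].
  set (c2 := (Rpower 2 beta + 2) / 2).
  assert (H2b : 2 < Rpower 2 beta).
  { rewrite <- (Rpower_1 2) at 1 by lra. apply Rpower_lt; lra. }
  assert (Hc2 : 2 < c2) by (unfold c2; lra).
  destruct HfRV as [_ HRV2].
  destruct (HRV2 2 ltac:(lra) ((Rpower 2 beta - 2) / 2) ltac:(lra)) as [d2 [Hd2 Hd2']].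
  assert (Hv : forall v, 0 < v < d2 -> c2 * f v <= f (2 * v)).
  { intros v Hv. specialize (Hd2' v Hv). apply Rabs_def2 in Hd2'. assert (0 < f v) by (apply Hfp; lra).
    assert (c2 <= f (2 * v) / f v) by (unfold c2; lra).
    apply (Rmult_le_compat_r (f v)) in H0; [|lra].
    replace (f (2 * v) / f v * f v) with (f (2*v)) in H0 by (field; lra). lra. }
  set (d := Rmin d2 1).
  assert (Hd : 0 < d /\ d <= d2 /\ d <= 1).
  { unfold d. split. apply Rmin_pos; lra. split. apply Rmin_l. apply Rmin_r. }
  set (G := fun y => RInt (fun u => / f u) y d).
  set (q := c2 / 2).
  assert (Hq : 1 < q) by (unfold q; lra).
  assert (Hit : forall k y, 0 < y -> 2 ^ k * y <= d -> q ^ k * G (2 ^ k * y) <= G y).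
  { intro k. induction k as [|k IH]; intros y Hy Hky.
    - simpl. rewrite !Rmult_1_l. lra.
    - simpl in Hky |- *.
      assert (Hp : 0 < 2 ^ k) by (apply pow_lt; lra).
      assert (Hqk : 0 < q ^ k) by (apply pow_lt; lra).
      assert (HC := G_contr f Hf_cont Hfp c2 d2 d Hc2 ltac:(lra) ltac:(lra) Hv (2 ^ k * y) ltac:(nra) ltac:(lra)).
      replace (2 * (2 ^ k * y)) with (2 * 2 ^ k * y) in HC by ring.
      fold q in HC. unfold G in *.
      assert (IH' := IH y Hy ltac:(lra)).
      assert (q ^ k * (q * RInt (fun u : R => / f u) (2 * 2 ^ k * y) d) <= q ^ k * RInt (fun u : R => / f u) (2 ^ k * y) d)
        by (apply Rmult_le_compat_l; lra).
      assert (Heq: forall a b c: R, a * b * c = b * (a * c)) by (intros; ring).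
      rewrite Heq. lra. }
  assert (HFd : 0 <= F d).
  { rewrite (F_eq f F HF d ltac:(lra)). apply (RInt_phi_ge0 f Hf_cont Hfp); lra. }
  intros eps Heps.
  destruct (pow_big q (2 / eps + 1) Hq) as [k Hk].
  assert (Hp2 : 0 < 2 ^ k) by (apply pow_lt; lra).
  assert (H2k : 1 <= 2 ^ k) by (apply pow_R1_Rle; lra).
  destruct (G1 (2 ^ k)) as [Ta HTa].
  destruct (Finv_small f F Hf_cont Hfp HF Finv T0 HT0 (d / 2 ^ k) ltac:(apply Rdiv_lt_0_compat; lra)) as [Tb [HTb0 HTb]].
  destruct (Hx_lim d ltac:(lra)) as [Tc HTc].
  set (T := Rmax (Rmax (Rmax Ta Tb) (Rmax Tc T0)) (Rmax 1 (2 * F d / eps + 1))).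
  exists T. intros t Ht.
  assert (HT : Ta <= t /\ Tb <= t /\ Tc <= t /\ T0 <= t /\ 1 <= t /\ 2 * F d / eps + 1 <= t).
  { unfold T in Ht.
    assert (Hm : forall a b c, Rmax a b <= c -> a <= c /\ b <= c).
    { intros a b c Hc. pose proof (Rmax_l a b). pose proof (Rmax_r a b). lra. }
    destruct (Hm _ _ _ Ht) as [A1 A2]. destruct (Hm _ _ _ A1) as [A3 A4].
    destruct (Hm _ _ _ A2) as [A5 A6]. destruct (Hm _ _ _ A3) as [A7 A8].
    destruct (Hm _ _ _ A4) as [A9 A10]. lra. }
  destruct HT as [H1 [H2 [H3 [H4 [H5 H6]]]]].
  destruct (HT0 t H4) as [Hz HFz].
  assert (Hxt := Hxpos t ltac:(lra)).
  assert (Hxd : x t < d) by (specialize (HTc t H3); apply Rabs_def2 in HTc; lra).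
  assert (Hkz : 2 ^ k * Finv t < x t).
  { specialize (HTa t H1). simpl in HTa. apply (Rmult_lt_compat_r (Finv t)) in HTa; [|lra].
    replace (x t / Finv t * Finv t) with (x t) in HTa by (field; lra). exact HTa. }
  assert (Hkd : 2 ^ k * Finv t <= d).
  { specialize (HTb t H2). apply (Rmult_lt_compat_r (2 ^ k)) in HTb; [|lra].
    replace (d / 2 ^ k * 2 ^ k) with d in HTb by (field; lra). lra. }
  assert (HI := Hit k (Finv t) Hz Hkd).
  assert (E1 : F (x t) <= F (2 ^ k * Finv t)) by (apply (F_mono f F Hf_cont Hfp HF); nra).
  assert (E2 : F (2 ^ k * Finv t) = G (2 ^ k * Finv t) + F d) by (apply (F_split f F Hf_cont Hfp HF); nra).
  assert (E3 : F (Finv t) = G (Finv t) + F d) by (apply (F_split f F Hf_cont Hfp HF); lra).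
  assert (E4 : F (x t) = G (x t) + F d) by (apply (F_split f F Hf_cont Hfp HF); lra).
  assert (E5 : 0 <= G (x t)) by (apply (RInt_phi_ge0 f Hf_cont Hfp); lra).
  assert (E6 : 0 <= G (2 ^ k * Finv t)) by (apply (RInt_phi_ge0 f Hf_cont Hfp); nra).
  set (Q := q ^ k) in *. set (G' := G (2 ^ k * Finv t)) in *.
  assert (HQ : 2 / eps < Q) by lra.
  assert (0 < 2 / eps) by (apply Rdiv_lt_0_compat; lra).
  assert (HQe : 2 < eps * Q).
  { apply (Rmult_lt_compat_l eps) in HQ; [|lra]. replace (eps * (2/eps)) with 2 in HQ by (field; lra). exact HQ. }
  assert (HG' : G' < eps * t / 2).
  { apply Rnot_le_lt. intro Hc. assert (Hqq : Q * (eps * t / 2) <= Q * G') by (apply Rmult_le_compat_l; lra).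
    assert (eps * Q * t > 2 * t) by nra.
    assert (Heq : Q * (eps * t / 2) = eps * Q * t / 2 :> R) by (unfold Rdiv; ring).
    rewrite Heq in Hqq. lra. }
  assert (HFd' : F d < eps * t / 2).
  { assert (Hw : 2 * F d / eps < t) by lra.
    apply (Rmult_lt_compat_r (eps / 2)) in Hw; [|lra].
    replace (2 * F d / eps * (eps / 2)) with (F d) in Hw by (field; lra). lra. }
  rewrite Rminus_0_r. rewrite Rabs_right.
  - apply (Rmult_lt_reg_r t); [lra|]. replace (F (x t) / t * t) with (F (x t)) by (field; lra). lra.
  - apply Rle_ge. apply Rdiv_le_0_compat; lra.
Qed.
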